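(* Let $(\tau,\ell)$ have law $\rho_0$ and let $\Delta_0=\max\{\ell(v):v\in\tau\}$. Then, as $m\to\infty$, $$\mathbb P(\Delta_0\ge m)\sim\frac{2}{m^2},$$ meaning that the ratio of the two sides tends to 1.
   Context: $\rho_0$ is the law of a Galton–Watson plane tree with offspring law $P(k)=2^{-k-1}$, $k\ge0$, in which the root has label 0 and every other vertex gets its parent's label plus an independent uniform element of $\{-1,0,1\}$. *)

(* Defs.v *)
From HB Require Import structures.
From mathcomp Require Import all_boot all_order all_algebra.
From mathcomp Require Import all_classical all_reals all_analysis.
Set Implicit Arguments. Unset Strict Implicit. Unset Printing Implicit Defensive.
Import Order.TTheory GRing.Theory Num.Theory.
Local Open Scope ring_scope.

Inductive ltree : Type := LNode : int -> seq ltree -> ltree.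

HB.instance Definition _ := gen_eqMixin ltree.
HB.instance Definition _ := gen_choiceMixin ltree.

Definition label (t : ltree) : int := let: LNode l _ := t in l.

Fixpoint valid_labels (t : ltree) : bool :=
  let: LNode l cs := t in
  (fix vl (cs : seq ltree) : bool :=
     match cs with
     | [::] => true
     | c :: cs' => [&& (`|label c - l| <= 1)%R, valid_labels c & vl cs']
     end) cs.

Fixpoint max_label (t : ltree) : int :=
  let: LNode l cs := t in
  (fix ml (cs : seq ltree) : int :=
     match cs with
     | [::] => l
     | c :: cs' => Num.max (max_label c) (ml cs')
     end) cs.

(* Probability under rho_0 of a given (finite) labeled tree:
   each vertex with k children contributes the offspring probability
   2^{-k-1}, and each of its k children contributes the probability 1/3 of
   its label increment. *)
Fixpoint rho0_weight (R : realType) (t : ltree) : R :=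
  let: LNode _ cs := t in
  (2 ^+ (size cs).+1)^-1 * (3 ^+ size cs)^-1 *
  (fix wl (cs : seq ltree) : R :=
     match cs with
     | [::] => 1
     | c :: cs' => rho0_weight R c * wl cs'
     end) cs.

Definition rho0_support : set ltree :=
  [set t | label t = 0 /\ valid_labels t].

Definition prob_Delta0_ge (R : realType) (m : nat) : \bar R :=
  \esum_(t in [set t | rho0_support t /\ (m%:Z <= max_label t)%R])
     (rho0_weight R t)%:E.

(* Main.v *)
Require Import Defs.
From HB Require Import structures.
From mathcomp Require Import all_boot all_order all_algebra.
From mathcomp Require Import all_classical all_reals all_analysis.
From mathcomp Require Import zify ring lra.
Import Order.TTheory GRing.Theory Num.Theory.
Import numFieldNormedType.Exports.
Local Open Scope classical_set_scope.
Local Open Scope ring_scope.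
Set Implicit Arguments. Unset Strict Implicit. Unset Printing Implicit Defensive.

Fixpoint lists (s : seq ltree) (k : nat) : seq (seq ltree) :=
  if k is k'.+1 then [seq c :: cs | c <- s, cs <- lists s k'] else [:: [::]].

Fixpoint trees (K n : nat) (l : int) : seq ltree :=
  if n is n'.+1 then
    [seq LNode l cs | k <- iota 0 K.+1,
       cs <- lists (trees K n' (l - 1) ++ trees K n' l ++ trees K n' (l + 1)) k]
  else [:: LNode l [::]].

Lemma treesS K n l : trees K n.+1 l =
  [seq LNode l cs | k <- iota 0 K.+1,
       cs <- lists (trees K n (l - 1) ++ trees K n l ++ trees K n (l + 1)) k].
Proof. by []. Qed.

Fixpoint nodes (t : ltree) : nat :=
  let: LNode _ cs := t in
  ((fix ns (cs : seq ltree) : nat :=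
     match cs with [::] => 0%N | c :: cs' => (nodes c + ns cs')%N end) cs).+1.

Lemma nodesE l cs : nodes (LNode l cs) = (\sum_(c <- cs) nodes c).+1.
Proof. congr S; elim: cs => [|c cs IH] /=; by rewrite ?big_nil ?big_cons ?IH. Qed.

Lemma validE l cs : valid_labels (LNode l cs) =
  all (fun c => (`|label c - l| <= 1) && valid_labels c) cs.
Proof. elim: cs => [|c cs IH] //=. by rewrite -IH andbA. Qed.

Lemma maxE_lt l cs (j : int) : (max_label (LNode l cs) < j) =
  (l < j) && all (fun c => max_label c < j) cs.
Proof.
elim: cs => [|c cs IH] /=; first by rewrite andbT.
by rewrite gt_max IH andbCA.
Qed.

Lemma label_le_max t : label t <= max_label t.
Proof.
case: t => l cs; elim: cs => [|c cs IH] //=.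
by rewrite le_max IH orbT.
Qed.

Lemma mem_lists s k cs : cs \in lists s k -> (size cs = k) /\ all (mem s) cs.
Proof.
elim: k cs => [|k IH] cs /=; first by rewrite inE => /eqP ->.
case/allpairsP => -[c cs'] [/= cin csin ->].
by have [<- ?] := IH _ csin; rewrite /= cin.
Qed.

Lemma lists_mem s cs : all (mem s) cs -> cs \in lists s (size cs).
Proof.
elim: cs => [|c cs IH] /=; first by rewrite inE.
by case/andP => cin /IH csin; apply: allpairs_f.
Qed.

Lemma uniq_lists s k : uniq s -> uniq (lists s k).
Proof.
move=> us; elim: k => [|k IH] //=.
apply: allpairs_uniq => //.
by move=> [a b] [c d] _ _ /= [-> ->].
Qed.

Lemma mem_trees K n l t : t \in trees K n l ->
  label t = l /\ valid_labels t.
Proof.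
elim: n l t => [|n IH] l t; first by rewrite inE => /eqP ->.
rewrite treesS => /allpairsPdep [k [cs [_ csin ->]]]; split => //.
have [_ /allP al] := mem_lists csin.
rewrite validE; apply/allP => c /al; rewrite /= !mem_cat => /or3P [] /IH [-> ->];
  rewrite andbT; lia.
Qed.

Lemma trees_mem K n t : valid_labels t -> (nodes t <= n.+1)%N -> (n <= K)%N ->
  t \in trees K n (label t).
Proof.
elim: n t => [|n IH] [l cs]; rewrite nodesE.
  move=> _ hn _; case: cs hn => [|c cs]; first by rewrite inE.
  rewrite big_cons; case: c => ? ?; rewrite nodesE; lia.
rewrite validE => /allP val hn hK.
rewrite treesS; apply/allpairsPdep; exists (size cs), cs; split => //.
  rewrite mem_iota /=.
  have : (size cs <= \sum_(c <- cs) nodes c)%N.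
    elim: cs {val hn} => [|c cs IHc] //=; rewrite big_cons.
    case: c => ? ?; rewrite nodesE; lia.
  lia.
apply: lists_mem; apply/allP => c cin.
have /andP [hl vc] := val c cin.
have hc : (nodes c <= n.+1)%N.
  have : (nodes c <= \sum_(c <- cs) nodes c)%N.
    rewrite (big_rem c cin) /=; lia.
  lia.
have := IH c vc hc (ltnW hK).
rewrite /= !mem_cat.
have : label c = l - 1 \/ label c = l \/ label c = l + 1 by lia.
by case=> [|[]] -> ->; rewrite ?orbT.
Qed.

Lemma uniq_trees K n l : uniq (trees K n l).
Proof.
elim: n l => [|n IH] l //.
rewrite treesS; apply: allpairs_uniq_dep; first exact: iota_uniq.
  move=> k _; apply: uniq_lists.
  rewrite !cat_uniq !IH /= andbT; apply/andP; split.
    apply/hasPn => t; rewrite mem_cat => /orP [] /mem_trees [ht1 _];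
      apply/negP => /mem_trees [ht2 _]; move: ht1 ht2 => ->; lia.
  apply/hasPn => t /mem_trees [ht1 _].
  apply/negP => /mem_trees [ht2 _]; move: ht1 ht2 => ->; lia.
move=> [k1 cs1] [k2 cs2] h1 h2 /= [e]; subst cs2.
move: h1 h2 => /allpairsPdep [x1 [y1 [_ ym1 e1]]] /allpairsPdep [x2 [y2 [_ ym2 e2]]].
have := congr1 (fun p : {x : nat & seq ltree} => (projT1 p, projT2 p)) e1.
have := congr1 (fun p : {x : nat & seq ltree} => (projT1 p, projT2 p)) e2.
case=> -> e4 [-> e5].
have [s1 _] := mem_lists ym1; have [s2 _] := mem_lists ym2.
by rewrite -s1 -s2 -e4 -e5.
Qed.

Section Sums.
Variable R : realType.
Local Notation w := (rho0_weight R).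

Lemma wE l cs : w (LNode l cs) =
  (2 ^+ (size cs).+1)^-1 * (3 ^+ size cs)^-1 * \prod_(c <- cs) w c.
Proof.
rewrite /=; congr (_ * _); elim: cs => [|c cs IH] /=; by rewrite ?big_nil ?big_cons ?IH.
Qed.

Lemma sum_lists (h : ltree -> R) s k :
  \sum_(cs <- lists s k) \prod_(c <- cs) h c = (\sum_(c <- s) h c) ^+ k.
Proof.
elim: k => [|k IH] /=; first by rewrite big_seq1 big_nil expr0.
rewrite big_allpairs_dep exprS big_distrl /=; apply: eq_bigr => c _.
by rewrite -IH big_distrr /=; apply: eq_bigr => cs _; rewrite big_cons.
Qed.

Definition G N (x : R) := \sum_(k <- iota 0 N) (2 ^+ k.+1)^-1 * x ^+ k.

Lemma sum_treesS (h : ltree -> R) c0 K n l :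
  (forall cs, h (LNode l cs) = c0 * ((2 ^+ (size cs).+1)^-1 * (3 ^+ size cs)^-1 *
       \prod_(c <- cs) h c)) ->
  \sum_(t <- trees K n.+1 l) h t = c0 * G K.+1
    ((\sum_(c <- trees K n (l - 1)) h c + \sum_(c <- trees K n l) h c
      + \sum_(c <- trees K n (l + 1)) h c) / 3).
Proof.
move=> hE; rewrite treesS big_allpairs_dep /G mulr_sumr; apply: eq_bigr => k _.
rewrite big_seq (eq_bigr (fun cs => c0 * ((2 ^+ k.+1)^-1 * (3 ^+ k)^-1 *
   \prod_(c <- cs) h c))); last first.
  by move=> cs /mem_lists [sz _]; rewrite hE sz.
rewrite -big_seq -mulr_sumr -mulr_sumr sum_lists !big_cat /=.
rewrite exprMn exprVn addrA; congr (_ * _); ring.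
Qed.

Lemma prod_ind (P : pred ltree) (h : ltree -> R) cs :
  \prod_(c <- cs) ((P c)%:R * h c) = (all P cs)%:R * \prod_(c <- cs) h c.
Proof.
elim: cs => [|c cs IH] /=; first by rewrite !big_nil mul1r.
rewrite !big_cons IH; case: (P c); case: (all P cs); rewrite /= ?mul1r ?mul0r ?mulr0 //.

Qed.

Variable K : nat.
Definition M n l := \sum_(t <- trees K n l) w t.
Definition F n l (j : int) := \sum_(t <- trees K n l) (((max_label t < j)%R)%:R * w t).

Lemma MS n l : M n.+1 l = G K.+1 ((M n (l - 1) + M n l + M n (l + 1)) / 3).
Proof.
by rewrite /M (@sum_treesS w 1) ?mul1r // => cs; rewrite wE mul1r.
Qed.

Lemma FS n l j : F n.+1 l j =
  ((l < j)%R)%:R * G K.+1 ((F n (l - 1) j + F n l j + F n (l + 1) j) / 3).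
Proof.
rewrite /F (@sum_treesS (fun t => ((max_label t < j)%R)%:R * w t) ((l < j)%R)%:R) // => cs.
rewrite maxE_lt wE prod_ind; case: (l < j); case: (all _ _);
  rewrite /= ?mul1r ?mul0r ?mulr0 //.
Qed.

Lemma M0 l : M 0 l = 2^-1.
Proof. by rewrite /M /= big_seq1 wE big_nil /= !mulr1 invr1 mulr1. Qed.

Lemma F0 l j : F 0 l j = ((l < j)%R)%:R * 2^-1.
Proof. by rewrite /F /= big_seq1 wE big_nil /= !mulr1 invr1 mulr1. Qed.

End Sums.

Section Ineq.
Variable R : realType.
Implicit Types x y d A : R.

Lemma G_id N x : G N x * (2 - x) = 1 - (x / 2) ^+ N.
Proof.
elim: N => [|N IH]; first by rewrite /G /= big_nil mul0r expr0 subrr.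
rewrite /G -addn1 iotaD big_cat /= big_seq1 add0n mulrDl.
rewrite /G in IH; rewrite IH addn1 !exprMn !exprVn.
have h2 : (2 : R) ^+ N != 0 by rewrite expf_neq0 // pnatr_eq0.
rewrite !exprS; field.
by [].
Qed.

Lemma G_ge0 N x : 0 <= x -> 0 <= G N x.
Proof.
move=> x0; rewrite /G; apply: sumr_ge0 => k _.
by rewrite mulr_ge0 // ?invr_ge0 ?exprn_ge0.
Qed.

Lemma G_mono N x y : 0 <= x -> x <= y -> G N x <= G N y.
Proof.
move=> x0 xy; rewrite /G; apply: ler_sum => k _.
rewrite ler_wpM2l // ?invr_ge0 ?exprn_ge0 //.
by rewrite lerXn2r // nnegrE (le_trans x0).
Qed.

Lemma G_expr N x : 0 <= x -> x <= 1 -> G N x = (2 - x)^-1 - (x / 2) ^+ N / (2 - x).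
Proof.
move=> x0 x1; have h : 2 - x != 0 by apply/negP => /eqP; lra.
by apply: (mulIf h); rewrite G_id; field.
Qed.

Lemma G_le N x : 0 <= x -> x <= 1 -> G N x <= (2 - x)^-1.
Proof.
move=> x0 x1; rewrite G_expr // lerBlDr lerDl.
by rewrite divr_ge0 // ?exprn_ge0 ?divr_ge0 //; lra.
Qed.

Lemma G_lb N x : 0 <= x -> x <= 1 -> (2 - x)^-1 - (2 ^+ N)^-1 <= G N x.
Proof.
move=> x0 x1; rewrite G_expr // lerB // -exprVn.
have hx : 0 <= (x / 2) ^+ N by rewrite exprn_ge0 // divr_ge0.
apply: (le_trans (y := (x / 2) ^+ N)).
  rewrite ler_pdivrMr; last lra.
  by rewrite ler_peMr //; lra.
by rewrite lerXn2r // ?nnegrE ?divr_ge0 ?invr_ge0 //; lra.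
Qed.

End Ineq.

Section Ineq2.
Variable R : realType.
Implicit Types x y d A : R.

Lemma pow_diff k x y d : 0 <= y -> y <= x -> x <= 1 -> x - y <= d -> d <= 1 ->
  x ^+ k - y ^+ k <= 1 - (1 - d) ^+ k.
Proof.
move=> y0 yx x1 xyd d1.
apply: (le_trans (y := 1 - (1 - (x - y)) ^+ k)).
  have -> : 1 - (1 - (x - y)) ^+ k = 1 ^+ k - (1 - (x - y)) ^+ k by rewrite expr1n.
  rewrite !subrXX.
  have -> : 1 - (1 - (x - y)) = x - y by ring.
  rewrite ler_wpM2l //; first lra.
  apply: ler_sum => i _; rewrite expr1n mul1r.
  rewrite -[X in _ <= X]mul1r ler_pM // ?exprn_ge0 //; try lra.
    by rewrite exprn_ile1 //; lra.
  by rewrite lerXn2r // ?nnegrE; lra.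
rewrite lerB // lerXn2r // ?nnegrE; lra.
Qed.

Lemma G_diff N x y A : 0 <= y -> y <= x -> x <= 1 -> x - y <= A -> A <= 1 ->
  G N x - G N y <= 1 - (1 + A)^-1.
Proof.
move=> y0 yx x1 xyA A1.
have A0 : 0 <= A by lra.
apply: (le_trans (y := G N 1 - G N (1 - A))).
  rewrite /G -!sumrB; apply: ler_sum => k _; rewrite -!mulrBr ler_wpM2l //.
  by rewrite expr1n; apply: pow_diff.
rewrite (G_expr N (x := 1)) //.
have := G_lb N (x := 1 - A); rewrite -exprVn.
have -> : 2 - (1 - A) = 1 + A by ring.
have -> : (2 : R) - 1 = 1 by lra.
rewrite invr1 div1r => h; have := h ltac:(lra) ltac:(lra).
have : 0 <= (2 ^-1) ^+ N :> R by rewrite exprn_ge0 // invr_ge0.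
lra.
Qed.

End Ineq2.

Section Main.
Variable R : realType.

Definition aa (i : int) : R :=
  if i is Posz p then 2 / (p.+1%:R * p.+2%:R) else 1.

Lemma aa_ge0 i : 0 <= aa i.
Proof. by case: i => // p; rewrite /aa divr_ge0 // mulr_ge0. Qed.

Lemma aa_le1 i : aa i <= 1.
Proof.
case: i => // p; rewrite /aa ler_pdivrMr ?mulr_gt0 // mul1r.
rewrite -natrM ler_nat; lia.
Qed.

Lemma aa_nonpos i : i <= 0 -> aa i = 1.
Proof.
case: i => // -[|p] //= _; rewrite mul1r divff //.
Qed.

Lemma aa_small p : aa (Posz p.+1) <= 3^-1.
Proof.
rewrite /aa ler_pdivrMr ?mulr_gt0 // -natrM.
have : (6%:R : R) <= (p.+2 * p.+3)%:R by rewrite ler_nat; lia.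
lra.
Qed.

Lemma aa_key p : aa (Posz p.+1) =
  1 - (1 + (aa (Posz p) + aa (Posz p.+1) + aa (Posz p.+2)) / 3)^-1.
Proof.
rewrite /aa -!natr1.
have x0 : 0 <= p%:R :> R by [].
set x := p%:R.
field.
by rewrite ![_ != 0]lt0r_neq0 //; nra.
Qed.


Lemma exists_pos (l j : int) : l < j -> exists p : nat, j - l = Posz p.+1.
Proof. move=> lj; exists (`|j - l|%N.-1); lia. Qed.

Lemma main_ind K n : forall l j,
  [/\ 0 <= F R K n l j, F R K n l j <= M R K n l, M R K n l <= 1,
      M R K n l - F R K n l j <= aa (j - l) & F R K n l j <= 1 - aa (j - l)].
Proof.
elim: n => [|n IH] l j.
  rewrite M0 F0; have [lj|jl] := ltP l j.
    have [p ep] := exists_pos lj; rewrite ep.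
    have h1 := aa_small p; have h2 := aa_ge0 (Posz p.+1); move: h1 h2.
    generalize (aa (Posz p.+1)) => t h1 h2; rewrite /= mul1r.
    split; lra.
  rewrite aa_nonpos; last lra.
  rewrite /= mul0r; split; lra.
have [hl1 hl2 hl3 hl4 hl5] := IH (l - 1) j.
have [hm1 hm2 hm3 hm4 hm5] := IH l j.
have [hr1 hr2 hr3 hr4 hr5] := IH (l + 1) j.
rewrite MS FS.
set Mb := (M R K n (l - 1) + M R K n l + M R K n (l + 1)) / 3.
set Fb := (F R K n (l - 1) j + F R K n l j + F R K n (l + 1) j) / 3.
have Mb0 : 0 <= Mb by rewrite /Mb; lra.
have Mb1 : Mb <= 1 by rewrite /Mb; lra.
have Fb0 : 0 <= Fb by rewrite /Fb; lra.
have FbMb : Fb <= Mb by rewrite /Fb /Mb; lra.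
have GM1 : G K.+1 Mb <= 1.
  apply: (le_trans (G_le _ Mb0 Mb1)).
  by rewrite invf_le1; lra.
have [lj|jl] := ltP l j; last first.
  rewrite mul0r subr0 aa_nonpos; last by move: jl; clear; lra.
  by rewrite subrr; split => //; exact: G_ge0.
rewrite mul1r.
have [p ep] := exists_pos lj.
have e1 : j - (l - 1) = Posz p.+2 by move: ep; clear; lia.
have e2 : j - (l + 1) = Posz p by move: ep; clear; lia.
rewrite e1 ep in hl4 hl5 hm4 hm5; rewrite e2 in hr4 hr5; rewrite ep.
have ha0 := aa_ge0 p; have ha1 := aa_ge0 p.+1; have ha2 := aa_ge0 p.+2.
have hb0 := aa_le1 p; have hb1 := aa_le1 p.+1; have hb2 := aa_le1 p.+2.
have key := aa_key p.
move: key ha0 ha1 ha2 hb0 hb1 hb2 hl4 hl5 hm4 hm5 hr4 hr5.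
set A := (aa (Posz p) + aa (Posz p.+1) + aa (Posz p.+2)) / 3.
move=> key ha0 ha1 ha2 hb0 hb1 hb2 hl4 hl5 hm4 hm5 hr4 hr5.
have A0 : 0 <= A by rewrite /A; clear -ha0 ha1 ha2; lra.
have A1 : A <= 1 by rewrite /A; clear -hb0 hb1 hb2; lra.
have MFA : Mb - Fb <= A by rewrite /Mb /Fb /A; clear -hl4 hm4 hr4; lra.
have FbA : Fb <= 1 - A by rewrite /Fb /A; clear -hl5 hm5 hr5; lra.
rewrite key; split.
- exact: G_ge0.
- exact: G_mono.
- exact: GM1.
- by apply: G_diff.
- have -> : 1 - (1 - (1 + A)^-1) = (2 - (1 - A))^-1.
    by rewrite opprB addrC subrK; congr (_^-1); ring.
  apply: (le_trans (G_mono _ Fb0 FbA)); apply: G_le => //; clear -A0 A1; lra.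
Qed.

Lemma inv_step (y e x : R) : 0 <= e -> 0 <= y -> y <= 1 -> x <= 1 -> y - e <= x ->
  (2 - y)^-1 - e <= (2 - x)^-1.
Proof.
move=> e0 y0 y1 x1 yex.
have u1 : 1 <= 2 - y by lra.
have u2 : 1 <= 2 - y + e by lra.
apply: (le_trans (y := (2 - y + e)^-1)); last first.
  by rewrite lef_pV2 ?posrE; lra.
have -> : (2 - y)^-1 - e = (2 - y + e)^-1 + (e / ((2 - y) * (2 - y + e)) - e).
  by field; rewrite ![_ != 0]lt0r_neq0 //; lra.
rewrite gerDl subr_le0 ler_pdivrMr ?mulr_gt0 //; try lra.
rewrite ler_peMr //; nra.
Qed.

Lemma avg3 (z a b c : R) : z <= a -> z <= b -> z <= c -> z <= (a + b + c) / 3.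
Proof. lra. Qed.

Lemma fin5 (a b c d e : R) : a - e <= c -> c - b <= d -> a - (e + b) <= d.
Proof. lra. Qed.

Lemma M_lb K n l : n.+1%:R / n.+2%:R - n.+1%:R / 2 ^+ K.+1 <= M R K n l.
Proof.
have p0 : 0 < 2 ^+ K.+1 :> R by rewrite exprn_gt0.
elim: n l => [|n IH] l.
  rewrite M0; have : 0 <= 1%:R / 2 ^+ K.+1 :> R by rewrite divr_ge0 // ltW.
  move: (1%:R / _) => t; lra.
rewrite MS.
have [_ _ hl _ _] := main_ind K n (l - 1) 0.
have [_ _ hm _ _] := main_ind K n l 0.
have [_ _ hr _ _] := main_ind K n (l + 1) 0.
have [a1 a2 _ _ _] := main_ind K n (l - 1) 0.
have [b1 b2 _ _ _] := main_ind K n l 0.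
have [c1 c2 _ _ _] := main_ind K n (l + 1) 0.
have il := IH (l - 1); have im := IH l; have ir := IH (l + 1).
set Mb := (M R K n (l - 1) + M R K n l + M R K n (l + 1)) / 3.
set y := n.+1%:R / n.+2%:R : R.
set e := n.+1%:R / 2 ^+ K.+1 : R.
have Mb1 : Mb <= 1 by rewrite /Mb; clear -hl hm hr; lra.
have Mb0 : 0 <= Mb by rewrite /Mb; clear -a1 a2 b1 b2 c1 c2; lra.
have Mbe : y - e <= Mb.
  by rewrite /Mb /y /e; apply: avg3.
have e0 : 0 <= e by rewrite /e divr_ge0 // ltW.
have y0 : 0 <= y by rewrite /y divr_ge0.
have y1 : y <= 1 by rewrite /y ler_pdivrMr // mul1r ler_nat.
have h1 := inv_step e0 y0 y1 Mb1 Mbe.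
have h2 := G_lb K.+1 Mb0 Mb1.
have q : (2 - y)^-1 = n.+2%:R / n.+3%:R.
  rewrite /y -!natr1; field.
  by rewrite ![_ != 0]lt0r_neq0 //; nra.
have -> : n.+2%:R / 2 ^+ K.+1 = e + (2 ^+ K.+1)^-1 :> R.
  by rewrite /e -(@natr1 R n.+1) mulrDl mul1r.
rewrite q in h1; exact: fin5 h1 h2.
Qed.

End Main.

Section Esum.
Variable R : realType.
Local Notation w := (rho0_weight R).

Lemma w_ge0 t : 0 <= w t.
Proof.
suff: forall n t, (nodes t <= n)%N -> 0 <= w t by move/(_ (nodes t) t (leqnn _)).
elim=> [|n IH] [l cs]; rewrite nodesE // => hn.
rewrite wE mulr_ge0 ?mulr_ge0 ?invr_ge0 ?exprn_ge0 //.
rewrite big_seq; apply: prodr_ge0 => c cin; apply: IH.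
have : (nodes c <= \sum_(c <- cs) nodes c)%N by rewrite (big_rem c cin) /=; lia.
lia.
Qed.

Lemma sum_filter_ge (m : int) s :
  \sum_(t <- [seq t <- s | (m <= max_label t)%R]) w t =
  \sum_(t <- s) w t - \sum_(t <- s) (((max_label t < m)%R)%:R * w t).
Proof.
rewrite big_filter big_mkcond -sumrB; apply: eq_bigr => t _.
by rewrite ltNge; case: (m <= max_label t); rewrite /= ?mul1r ?mul0r ?subr0 ?subrr.
Qed.

Definition Ev (m : nat) := [set t | rho0_support t /\ (m%:Z <= max_label t)%R].

Lemma sum_set_B (m : nat) K n :
  (\sum_(x \in [set` [seq t <- trees K n 0 | (m%:Z <= max_label t)%R]]) (w x)%:E)%E =
  (M R K n 0 - F R K n 0 m)%:E.
Proof.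
rewrite -fsbig_seq ?filter_uniq ?uniq_trees // sumEFin sum_filter_ge //.
Qed.

Lemma prob_ub (m : nat) : (prob_Delta0_ge R m <= (aa R m)%:E)%E.
Proof.
rewrite /prob_Delta0_ge /esum; apply: ge_ereal_sup => _ [X [finX XE] <-].
have [s sX] := (finite_seqP X).1 finX; subst X.
set N := \max_(t <- s) nodes t.
set B := [seq t <- trees N N 0 | (m%:Z <= max_label t)%R].
apply: (@le_trans _ _ (\sum_(x \in [set` B]) (w x)%:E)%E).
  apply: lee_fsum_nneg_subset.
  - by apply/finite_seqP; exists s.
  - by apply/finite_seqP; exists B.
  - move=> x; rewrite !inE /= => xs.
    have [[l0 vx] mx] := XE x xs.
    rewrite mem_filter mx /=.
    rewrite -l0; apply: trees_mem => //.
    have : (nodes x <= N)%N by rewrite /N; apply: leq_bigmax_seq.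
    lia.
  - by move=> t _; rewrite lee_fin w_ge0.
rewrite sum_set_B lee_fin.
by have [_ _ _ h _] := main_ind R N N 0 m; rewrite subr0 in h.
Qed.

Lemma prob_lb (m : nat) n K :
  ((M R K n 0 - F R K n 0 m)%:E <= prob_Delta0_ge R m)%E.
Proof.
rewrite -sum_set_B; apply: esum_ge.
exists [set` [seq t <- trees K n 0 | (m%:Z <= max_label t)%R]] => //.
split; first by apply/finite_seqP; eexists.
move=> x /=; rewrite mem_filter => /andP [mx xin].
by have [l0 vx] := mem_trees xin.
Qed.

End Esum.

Lemma pow_nat_bound n : (n.+1 * n.+1 <= 2 ^ (2 * n).+1)%N.
Proof.
elim: n => // n IH.
have -> : (2 * n.+1).+1 = ((2 * n).+1 + 2)%N by lia.
rewrite expnD; nia.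
Qed.

Section Fin.
Variable R : realType.

Lemma tail_bound n :
  1 - n.+1%:R / n.+2%:R + n.+1%:R / 2 ^+ (2 * n).+1 <= 2 / n.+1%:R :> R.
Proof.
have e1 : 1 - n.+1%:R / n.+2%:R = (n.+2%:R)^-1 :> R.
  rewrite -(@natr1 R n.+1); field.
  by rewrite lt0r_neq0 // ltr_pwDr // ler0n.
have e2 : (n.+2%:R)^-1 <= (n.+1%:R)^-1 :> R.
  by rewrite lef_pV2 ?posrE ?ltr0n // ler_nat.
have e3 : n.+1%:R / 2 ^+ (2 * n).+1 <= (n.+1%:R)^-1 :> R.
  rewrite ler_pdivrMr ?exprn_gt0 //.
  have hP : (n.+1 * n.+1)%:R <= 2 ^+ (2 * n).+1 :> R.
    by rewrite -natrX ler_nat pow_nat_bound.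
  apply: (le_trans (y := (n.+1%:R)^-1 * (n.+1 * n.+1)%:R)).
    by rewrite natrM mulKf // pnatr_eq0.
  by rewrite ler_wpM2l // invr_ge0 ler0n.
rewrite e1; move: e2 e3; set a := (n.+1%:R)^-1 : R.
have -> : 2 / n.+1%:R = a + a :> R by rewrite /a; field.
by move=> h2 h3; apply: lerD.
Qed.

Lemma fine_prob (m : nat) : (0 < m)%N -> fine (prob_Delta0_ge R m) = aa R m.
Proof.
move=> m0.
have ub := prob_ub R m.
have lb : (0 <= prob_Delta0_ge R m)%E.
  by apply: esum_ge0 => t _; rewrite lee_fin w_ge0.
move: ub lb; case E : (prob_Delta0_ge R m) => [v| |] // ub lb; rewrite [fine _]/=.
rewrite lee_fin in ub; apply/le_anti; rewrite ub andTb.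
apply/ler_addgt0Pr => eps eps0.
set n := Num.Def.archi_bound (2 / eps).
have hn : 2 / eps < n%:R by apply: archi_boundP; rewrite divr_ge0 // ltW.
have h1 := prob_lb R m n (2 * n).
rewrite E lee_fin in h1.
have h2 := M_lb R (2 * n) n 0.
have [_ _ _ _ h3] := main_ind R (2 * n) n 0 m.
rewrite subr0 in h3.
have h4 := tail_bound n.
have h5 : 2 / n.+1%:R < eps.
  rewrite ltr_pdivrMr ?ltr0n // mulrC -ltr_pdivrMr //.
  apply: (lt_le_trans hn); rewrite ler_nat; lia.
move: h1 h2 h3 h4 h5.
set A := M R (2 * n) n 0; set B := F R (2 * n) n 0 m.
set c := n.+1%:R / n.+2%:R - n.+1%:R / 2 ^+ (2 * n).+1.
set d := 2 / n.+1%:R.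
have -> : 1 - n.+1%:R / n.+2%:R + n.+1%:R / 2 ^+ (2 * n).+1 = 1 - c :> R.
  by rewrite /c; ring.
clearbody A B c d; lra.
Qed.

End Fin.

Unset Implicit Arguments.

Theorem lemma5 (R : realType) :
  (fun m : nat => fine (prob_Delta0_ge R m) / (2 / (m%:R ^+ 2))) @ \oo --> (1 : R).
Proof.
apply/cvgrPdist_le => eps eps0.
set N := Num.Def.archi_bound (3 / eps).
have hN : 3 / eps < N%:R by apply: archi_boundP; rewrite divr_ge0 // ltW.
exists N.+1 => // t /= ht.
have t0 : (0 < t)%N by lia.
rewrite fine_prob //.
have -> : aa R t = 2 / (t.+1%:R * t.+2%:R) by [].
have tR : 0 < t%:R :> R by rewrite ltr0n.
have -> : 1 - 2 / (t.+1%:R * t.+2%:R) / (2 / t%:R ^+ 2) =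
    (3 * t%:R + 2) / (t.+1%:R * t.+2%:R) :> R.
  rewrite -!natr1; field.
  by rewrite ![_ != 0]lt0r_neq0 //; lra.
have d0 : 0 < t.+1%:R * t.+2%:R :> R by rewrite mulr_gt0 ?ltr0n.
rewrite ger0_norm; last by rewrite divr_ge0 // ?ltW //; lra.
apply: (le_trans (y := 3 / t.+1%:R)).
  have -> : 3 / t.+1%:R = (3 * t%:R + 2) / (t.+1%:R * t.+2%:R) +
      4 / (t.+1%:R * t.+2%:R) :> R.
    rewrite -!natr1; field.
    by rewrite ![_ != 0]lt0r_neq0 //; lra.
  by rewrite lerDl divr_ge0 // ltW.
rewrite ler_pdivrMr ?ltr0n // mulrC -ler_pdivrMr //.
apply: (le_trans (ltW hN)); rewrite ler_nat; lia.
Qed.
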